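(* Let $\{z_n\}_{n\ge 0}$ be a sequence of positive real numbers satisfying $$(\alpha_1n+\alpha_0)z_{n+1}=(\beta_1n+\beta_0)z_n-(\gamma_1n+\gamma_0)z_{n-1}\quad (n\ge 1),$$ where $\alpha_1n+\alpha_0$, $\beta_1n+\beta_0$, $\gamma_1n+\gamma_0$ are positive for all $n\ge 1$. Put $A=\beta_0\gamma_1-\beta_1\gamma_0$, $B=\gamma_0\alpha_1-\gamma_1\alpha_0$, $C=\alpha_0\beta_1-\alpha_1\beta_0$. Suppose $z_0z_2\ge z_1^2$. Then $\{z_n\}_{n\ge 0}$ is log-convex if one of the following holds: (i) $B\ge 0$ and $C\ge 0$; (ii) $B<0$, $C>0$, $AC\ge B^2$ and $z_0B+z_1C\ge 0$; (iii) $B>0$, $C<0$, $AC\le B^2$ and $z_0B+z_1C\ge 0$.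
   Context: A sequence $a_0,a_1,\ldots$ of nonnegative real numbers is log-convex if $a_{k-1}a_{k+1}\ge a_k^2$ for all $k\ge 1$. *)

(* Defs.v *)
From Stdlib Require Import Reals.
Open Scope R_scope.

Definition log_convex (a : nat -> R) : Prop :=
  (forall n, 0 <= a n) /\
  (forall k : nat, (1 <= k)%nat -> a (k - 1)%nat * a (k + 1)%nat >= a k ^ 2).

(* Main.v *)
Require Import Defs.
From Stdlib Require Import Reals Lra Psatz.
Open Scope R_scope.

Lemma pos_mul_ge0 (p d : R) : 0 < p -> p * d >= 0 -> d >= 0.
Proof.
  intros Hp H. destruct (Rlt_or_le d 0) as [Hd|Hd]; [|lra].
  assert (p * d < 0) by (apply Rmult_pos_neg; lra). lra.
Qed.

Lemma step_lem (an bn gn an' bn' gn' u v w : R) :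
  0 < an -> 0 < gn -> 0 < an' -> 0 < v -> v <= u ->
  an * u * w = bn * u - gn -> an' * v * u = bn' * v - gn' ->
  (an' * bn - an * bn') * v + (an * gn' - an' * gn) >= 0 -> w >= u.
Proof.
  intros Ha Hg Ha' Hv Huv H1 H2 HC.
  assert (E : an * u * v * an' * (w - u) = an' * v * (an * u * w) - an * u * (an' * v * u)) by ring.
  rewrite H1, H2 in E.
  assert (E2 : an * u * v * an' * (w - u) =
     u * ((an' * bn - an * bn') * v + (an * gn' - an' * gn)) + an' * gn * (u - v)) by (rewrite E; ring).
  assert (Hp : 0 < an * u * v * an') by (repeat apply Rmult_lt_0_compat; lra).
  assert (an * u * v * an' * (w - u) >= 0).
  { rewrite E2. assert (0 <= u * ((an' * bn - an * bn') * v + (an * gn' - an' * gn))) by (apply Rmult_le_pos; lra).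
    assert (0 <= an' * gn * (u - v)) by (apply Rmult_le_pos; [apply Rmult_le_pos|]; lra). lra. }
  apply pos_mul_ge0 in H; lra.
Qed.

Lemma bound_lem (an bn gn u w r : R) :
  0 < an -> 0 < gn -> 0 < u -> u <= r ->
  an * u * w = bn * u - gn -> an * r ^ 2 - bn * r + gn >= 0 -> w <= r.
Proof.
  intros Ha Hg Hu Hur H1 H2.
  assert (E : an * u * r * (r - w) = u * (an * r ^ 2 - bn * r + gn) + gn * (r - u)).
  { assert (an * u * r * (r - w) = r * (an * u * r - an * u * w)) by ring. rewrite H, H1. ring. }
  assert (Hp : 0 < an * u * r) by (repeat apply Rmult_lt_0_compat; lra).
  assert (an * u * r * (r - w) >= 0).
  { rewrite E. assert (0 <= u * (an * r ^ 2 - bn * r + gn)) by (apply Rmult_le_pos; lra).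
    assert (0 <= gn * (r - u)) by (apply Rmult_le_pos; lra). lra. }
  apply pos_mul_ge0 in H; lra.
Qed.

Theorem theorem3p10 (z : nat -> R)
  (a1 a0 b1 b0 g1 g0 : R)
  (hz : forall n, 0 < z n)
  (hrec : forall n : nat, (1 <= n)%nat ->
     (a1 * INR n + a0) * z (S n) =
     (b1 * INR n + b0) * z n - (g1 * INR n + g0) * z (n - 1)%nat)
  (ha : forall n : nat, (1 <= n)%nat -> 0 < a1 * INR n + a0)
  (hb : forall n : nat, (1 <= n)%nat -> 0 < b1 * INR n + b0)
  (hg : forall n : nat, (1 <= n)%nat -> 0 < g1 * INR n + g0)
  (h02 : z 0%nat * z 2%nat >= z 1%nat ^ 2) :
  let A := b0 * g1 - b1 * g0 in
  let B := g0 * a1 - g1 * a0 in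
  let C := a0 * b1 - a1 * b0 in
  ( (B >= 0 /\ C >= 0)
    \/ (B < 0 /\ C > 0 /\ A * C >= B ^ 2 /\ z 0%nat * B + z 1%nat * C >= 0)
    \/ (B > 0 /\ C < 0 /\ A * C <= B ^ 2 /\ z 0%nat * B + z 1%nat * C >= 0) ) ->
  log_convex z.
Proof.
  intros A B C Hcase.
  set (x := fun n => z (S n) / z n).
  assert (xpos : forall n, 0 < x n).
  { intro n. unfold x. apply Rdiv_lt_0_compat; apply hz. }
  assert (xrec : forall m, (a1 * INR (S m) + a0) * x m * x (S m) =
                           (b1 * INR (S m) + b0) * x m - (g1 * INR (S m) + g0)).
  { intro m. pose proof (hrec (S m) ltac:(lia)) as H.
    replace (S m - 1)%nat with m in H by lia.
    pose proof (hz m). pose proof (hz (S m)).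
    unfold x.
    assert (E : (a1 * INR (S m) + a0) * (z (S m) / z m) * (z (S (S m)) / z (S m))
       = ((a1 * INR (S m) + a0) * z (S (S m))) / z m) by (field; lra).
    rewrite E, H. field. lra. }
  assert (equiv : forall m, z m * z (m + 2)%nat - z (m + 1)%nat ^ 2
                    = z m * z (S m) * (x (S m) - x m)).
  { intro m. replace (m + 2)%nat with (S (S m)) by lia. replace (m + 1)%nat with (S m) by lia.
    pose proof (hz m). pose proof (hz (S m)). unfold x. field. lra. }
  assert (base : x 0%nat <= x 1%nat).
  { pose proof (equiv 0%nat) as E. simpl in E.
    assert (Hp : 0 < z 0%nat * z 1%nat) by (apply Rmult_lt_0_compat; apply hz).
    assert (z 0%nat * z 1%nat * (x 1%nat - x 0%nat) >= 0) by (rewrite <- E; simpl in h02; lra).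
    apply pos_mul_ge0 in H; lra. }
  assert (Hq : forall m, x 0%nat <= x m -> C * x m + B >= 0).
  { destruct Hcase as [[HB HC]|[[HB [HC [_ H0]]]|[HB [HC [HAC H0]]]]].
    - intros m _. pose proof (xpos m). nra.
    - assert (C * x 0%nat + B >= 0).
      { pose proof (hz 0%nat). unfold x.
        assert (E : C * (z 1%nat / z 0%nat) + B = (z 0%nat * B + z 1%nat * C) / z 0%nat) by (field; lra).
        rewrite E. apply Rle_ge; unfold Rdiv; apply Rmult_le_pos; [lra|apply Rlt_le, Rinv_0_lt_compat; lra]. }
      intros m Hm. nra.
    - set (r := - B / C).
      assert (Cr : C * r = - B) by (unfold r; field; lra).
      assert (Hr : forall m, x m <= r).
      { induction m.
        - assert (C * x 0%nat + B >= 0).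
          { pose proof (hz 0%nat). unfold x.
            assert (E : C * (z 1%nat / z 0%nat) + B = (z 0%nat * B + z 1%nat * C) / z 0%nat) by (field; lra).
            rewrite E. apply Rle_ge; unfold Rdiv; apply Rmult_le_pos; [lra|apply Rlt_le, Rinv_0_lt_compat; lra]. }
          nra.
        - apply (bound_lem (a1 * INR (S m) + a0) (b1 * INR (S m) + b0) (g1 * INR (S m) + g0) (x m)).
          + apply ha; lia.
          + apply hg; lia.
          + apply xpos.
          + exact IHm.
          + apply xrec.
          + set (an := a1 * INR (S m) + a0). set (bn := b1 * INR (S m) + b0).
            set (gn := g1 * INR (S m) + g0).
            assert (Han : 0 < an) by (apply ha; lia).
            assert (E : C ^ 2 * (an * r ^ 2 - bn * r + gn) = an * (B ^ 2 - A * C)).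
            { assert (E1 : C ^ 2 * (an * r ^ 2 - bn * r + gn) = an * (C * r) ^ 2 - bn * C * (C * r) + gn * C ^ 2) by ring.
              rewrite E1, Cr. unfold an, bn, gn, A, B, C. ring. }
            assert (HC2 : 0 < C ^ 2) by nra.
            apply (pos_mul_ge0 (C ^ 2)); [exact HC2|]. rewrite E.
            apply Rle_ge, Rmult_le_pos; lra. }
      intros m _. pose proof (Hr m). nra. }
  assert (mono : forall m, x 0%nat <= x m /\ x m <= x (S m)).
  { induction m.
    - split; [lra|exact base].
    - destruct IHm as [H1 H2]. split; [lra|].
      apply Rge_le.
      apply (step_lem (a1 * INR (S (S m)) + a0) (b1 * INR (S (S m)) + b0) (g1 * INR (S (S m)) + g0)
                      (a1 * INR (S m) + a0) (b1 * INR (S m) + b0) (g1 * INR (S m) + g0)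
                      (x (S m)) (x m) (x (S (S m)))).
      + apply ha; lia.
      + apply hg; lia.
      + apply ha; lia.
      + apply xpos.
      + exact H2.
      + apply xrec.
      + apply xrec.
      + pose proof (Hq m H1) as HQ.
        replace ((a1 * INR (S m) + a0) * (b1 * INR (S (S m)) + b0) -
                 (a1 * INR (S (S m)) + a0) * (b1 * INR (S m) + b0)) with C.
        2:{ rewrite (S_INR (S m)). unfold C. ring. }
        replace ((a1 * INR (S (S m)) + a0) * (g1 * INR (S m) + g0) -
                 (a1 * INR (S m) + a0) * (g1 * INR (S (S m)) + g0)) with B.
        2:{ rewrite (S_INR (S m)). unfold B. ring. }
        exact HQ. }
  split.
  - intro n. left. apply hz.
  - intros k Hk. destruct k as [|m]; [lia|].
    replace (S m - 1)%nat with m by lia.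
    replace (S m + 1)%nat with (m + 2)%nat by lia.
    pose proof (equiv m) as E.
    assert (0 <= z m * z (S m) * (x (S m) - x m)).
    { apply Rmult_le_pos. apply Rlt_le, Rmult_lt_0_compat; apply hz.
      destruct (mono (S m)). destruct (mono m). lra. }
    replace (m + 1)%nat with (S m) in E by lia. lra.
Qed.
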